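(* Let $\mathsf K$ be a class of $\tau$-algebras. Then $$\mathsf K\subseteq\bigcup_{\mu\in\mathsf{Ord}}\mathsf K^{\diamond^\mu}\subseteq\bigcup_{\mathbf A\in\mathsf K}\mathbb V(\mathbf A)\subseteq\mathbb V(\mathsf K).$$
   Context: $\tau$ is a set of $\omega$-ary operation symbols disjoint from $\{q\}\cup\{e_i:i\in\omega\}$; a $\tau$-algebra has operations $A^\omega\to A$. $\mathbb V(\mathsf K)$ is the smallest variety (class closed under isomorphic copies, homomorphic images, subalgebras, arbitrary products) containing $\mathsf K$. An infinitary clone $\tau$-algebra is an algebra with constants $e_i$ ($i\in\omega$), a constant $f$ for each $f\in\tau$, and an $\omega$-ary $q$ satisfying (N1) $q(e_i,x_0,x_1,\dots)=x_i$; (N2) $q(x,e_0,e_1,\dots)=x$; (N3) $q(q(x,y_0,y_1,\dots),\boldsymbol z)=q(x,q(y_0,\boldsymbol z),q(y_1,\boldsymbol z),\dots)$. $\mathcal O^{(\omega)}_{\mathbf A}$ is the infinitary clone $\tau$-algebra of all functions $A^\omega\to A$ with $e_i(s)=s_i$, $q(g_0,g_1,\dots)(s)=g_0(g_1(s),g_2(s),\dots)$, $f\mapsto f^{\mathbf A}$; $\mathsf{FCA}(\mathbf A)$ is the class of its subalgebras. For a class $\mathsf K$ of $\tau$-algebras, $\mathsf K^{\triangle}$ is the class of infinitary clone $\tau$-algebras isomorphic to a subalgebra of $\mathcal O^{(\omega)}_{\mathbf A}$ for some $\mathbf A\in\mathsf K$; for a class $\mathsf H$ of infinitary clone $\tau$-algebras,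 $\mathsf H^{\nabla}$ is the class of $\tau$-algebras isomorphic to some $\mathbf A$ with $\mathsf{FCA}(\mathbf A)\cap\mathsf H\ne\emptyset$. Put $\mathsf K^\diamond=(\mathsf K^\triangle)^\nabla$ and define by transfinite recursion $\mathsf K^{\diamond^0}=\mathsf K$, $\mathsf K^{\diamond^{\nu+1}}=(\mathsf K^{\diamond^\nu})^\diamond$, and $\mathsf K^{\diamond^\mu}=\bigcup_{\nu<\mu}\mathsf K^{\diamond^\nu}$ for limit $\mu$. *)

(* Defs.v *)
From Stdlib Require Import Wellfounded.
Set Implicit Arguments.
Unset Strict Implicit.



Section Defs.
Variable tau : Type.

Record alg := Alg { car : Type; op : tau -> (nat -> car) -> car }.

Definition class := alg -> Prop.
Arguments op : clear implicits.

Definition is_hom (A B : alg) (h : car A -> car B) : Prop :=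
  forall f (s : nat -> car A), h (op A f s) = op B f (fun i => h (s i)).

Definition iso (A B : alg) : Prop :=
  exists (h : car A -> car B) (g : car B -> car A),
    is_hom h /\ (forall x, g (h x) = x) /\ (forall y, h (g y) = y).

Record subuniverse (A : alg) := SubU {
  su_pred : car A -> Prop;
  su_closed : forall f (s : nat -> car A),
      (forall i, su_pred (s i)) -> su_pred (op A f s) }.

Definition sub_alg (A : alg) (S : subuniverse A) : alg :=
  @Alg {x : car A | su_pred S x}
    (fun f s => exist _ (op A f (fun i => proj1_sig (s i)))
                        (@su_closed A S f _ (fun i => proj2_sig (s i)))).

Definition prod_alg (I : Type) (F : I -> alg) : alg :=
  @Alg (forall i, car (F i)) (fun f s => fun i => op (F i) f (fun n => s n i)).

Definition iso_closed (C : class) := forall A B, C A -> iso A B -> C B.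
Definition H_closed (C : class) :=
  forall A B (h : car A -> car B), C A -> is_hom h ->
    (forall y, exists x, h x = y) -> C B.
Definition S_closed (C : class) := forall A (S : subuniverse A), C A -> C (sub_alg S).
Definition P_closed (C : class) :=
  forall (I : Type) (F : I -> alg), (forall i, C (F i)) -> C (prod_alg F).

Definition variety (K : class) : class := fun A =>
  forall C : class, iso_closed C -> H_closed C -> S_closed C -> P_closed C ->
    (forall B, K B -> C B) -> C A.

(** Infinitary clone tau-algebras (signature: constants e_i, constants for
    each f in tau, and the omega-ary q(x, y_0, y_1, ...) written q x y). *)
Record calg := CAlg {
  ccar : Type;
  ce : nat -> ccar;
  cf : tau -> ccar;
  cq : ccar -> (nat -> ccar) -> ccar }.

Definition is_clone (C : calg) : Prop :=
  (forall i (x : nat -> ccar C), cq (ce C i) x = x i) /\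
  (forall x, cq x (ce C) = x) /\
  (forall x (y : nat -> ccar C) (z : nat -> ccar C),
      cq (cq x y) z = cq x (fun i => cq (y i) z)).

Definition cis_hom (C D : calg) (h : ccar C -> ccar D) : Prop :=
  (forall i, h (ce C i) = ce D i) /\ (forall f, h (cf C f) = cf D f) /\
  (forall x y, h (cq x y) = cq (h x) (fun i => h (y i))).

Definition ciso (C D : calg) : Prop :=
  exists (h : ccar C -> ccar D) (g : ccar D -> ccar C),
    cis_hom h /\ (forall x, g (h x) = x) /\ (forall y, h (g y) = y).

Definition fullclone (A : alg) : calg :=
  @CAlg ((nat -> car A) -> car A)
    (fun i s => s i)
    (fun f => op A f)
    (fun g0 g s => g0 (fun i => g i s)).

Record csubuniverse (A : alg) := CSubU {
  csu_pred : ((nat -> car A) -> car A) -> Prop;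
  csu_e : forall i, csu_pred (ce (fullclone A) i);
  csu_f : forall f, csu_pred (cf (fullclone A) f);
  csu_q : forall x y, csu_pred x -> (forall i, csu_pred (y i)) ->
            csu_pred (@cq (fullclone A) x y) }.

Definition csub_alg (A : alg) (S : csubuniverse A) : calg :=
  @CAlg {g | csu_pred S g}
    (fun i => exist _ _ (csu_e S i))
    (fun f => exist _ _ (csu_f S f))
    (fun x y => exist _ _ (@csu_q A S _ _ (proj2_sig x) (fun i => proj2_sig (y i)))).

Definition cclass := calg -> Prop.

Definition triangle (K : class) : cclass := fun C =>
  is_clone C /\ exists A, K A /\ exists S : csubuniverse A, ciso C (csub_alg S).

Definition nabla (H : cclass) : class := fun B =>
  exists A, iso B A /\ exists S : csubuniverse A, H (csub_alg S).

Definition diamond (K : class) : class := nabla (triangle K).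

(** Ordinals, represented as elements of well-ordered types. *)
Record WellOrder := WO {
  wo_car :> Type;
  wo_lt : wo_car -> wo_car -> Prop;
  wo_wf : well_founded wo_lt;
  wo_trans : forall x y z, wo_lt x y -> wo_lt y z -> wo_lt x z;
  wo_total : forall x y, wo_lt x y \/ x = y \/ wo_lt y x }.

(** K^{diamond^mu} by transfinite recursion: 0 |-> K,
    successor nu+1 |-> (K^{diamond^nu})^diamond, limit mu |-> union below. *)
Definition diamond_iter (K : class) (W : WellOrder) : W -> class :=
  Fix (@wo_wf W) (fun _ => class)
    (fun x rec A =>
       ((forall y, ~ @wo_lt W y x) /\ K A) \/
       (exists y (h : @wo_lt W y x),
          (forall z, @wo_lt W z x -> z = y \/ @wo_lt W z y) /\
          diamond (fun B => rec y h B) A) \/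
       ((exists y, @wo_lt W y x) /\
        (forall y, @wo_lt W y x -> exists z, @wo_lt W y z /\ @wo_lt W z x) /\
        exists y (h : @wo_lt W y x), rec y h A)).

Definition diamond_union (K : class) : class := fun A =>
  exists (W : WellOrder) (mu : W), diamond_iter K mu A.

End Defs.

(* Main.v *)
Require Import Defs.
From Stdlib Require Import Cantor ClassicalEpsilon FunctionalExtensionality ProofIrrelevance Wellfounded.

Section Key.
Variable tau : Type.

Lemma iso_sym (A B : alg tau) : iso A B -> iso B A.
Proof.
  intros [h [g [Hh [Hgh Hhg]]]]. exists g, h. split; [|split; assumption].
  intros f s. rewrite <- (Hgh (@op tau A f (fun i => g (s i)))), Hh.
  f_equal. f_equal. apply functional_extensionality; intro i. now rewrite Hhg.
Qed.

Variables (A1 A2 : alg tau) (S1 : csubuniverse A1) (S2 : csubuniverse A2).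
Variables (h : ccar (csub_alg S1) -> ccar (csub_alg S2)) (g : ccar (csub_alg S2) -> ccar (csub_alg S1)).
Hypotheses (Hh : cis_hom h) (Hgh : forall x, g (h x) = x).

Inductive R : ((nat -> car A1) -> car A1) -> ((nat -> car A2) -> car A2) -> Prop :=
| Re i : R (fun s => s i) (fun s => s i)
| Rf f : R (@op tau A1 f) (@op tau A2 f)
| Rq x y x' y' : R x x' -> (forall i, R (y i) (y' i)) ->
    R (fun s => x (fun i => y i s)) (fun s => x' (fun i => y' i s)).

Lemma R_in u v : R u v -> csu_pred S1 u.
Proof.
  induction 1.
  - exact (csu_e S1 i).
  - exact (csu_f S1 f).
  - exact (@csu_q tau A1 S1 _ _ IHR H1).
Qed.
Arguments R_in {u v}.

Lemma R_h u v : R u v -> forall pu, proj1_sig (h (exist (csu_pred S1) u pu)) = v.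
Proof.
  destruct Hh as [He [Hf Hq]].
  induction 1; intro pu.
  - rewrite (proof_irrelevance _ pu (csu_e S1 i)). exact (f_equal (@proj1_sig _ _) (He i)).
  - rewrite (proof_irrelevance _ pu (csu_f S1 f)). exact (f_equal (@proj1_sig _ _) (Hf f)).
  - pose proof (R_in H) as px. pose proof (fun i => R_in (H0 i)) as py.
    rewrite (proof_irrelevance _ pu (@csu_q tau A1 S1 _ _ px py)).
    change (exist _ _ (@csu_q tau A1 S1 _ _ px py)) with
      (@cq _ (csub_alg S1) (exist _ x px) (fun i => exist _ (y i) (py i))).
    rewrite Hq. cbn [cq csub_alg fullclone proj1_sig]. rewrite (IHR px).
    apply functional_extensionality; intro s. f_equal.
    apply functional_extensionality; intro i. now rewrite (H1 i (py i)).
Qed.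
Arguments R_h {u v}.

Lemma R_inj u1 u2 v : R u1 v -> R u2 v -> u1 = u2.
Proof.
  intros H1 H2. pose proof (R_in H1) as p1. pose proof (R_in H2) as p2.
  assert (E : h (exist _ u1 p1) = h (exist _ u2 p2)).
  { apply eq_sig_hprop; [intros; apply proof_irrelevance|].
    now rewrite (R_h H1), (R_h H2). }
  apply (f_equal g) in E. rewrite !Hgh in E. exact (f_equal (@proj1_sig _ _) E).
Qed.
Arguments R_inj {u1 u2 v}.

Definition pr (n m : nat) := to_nat (n, m).
Definition t_of (s1 s2 : nat -> car A1) (k : nat) : car A1 :=
  match of_nat k with (0, m) => s1 m | (_, m) => s2 m end.

Lemma WD u1 v1 s1 u2 v2 s2 : R u1 v1 -> R u2 v2 ->
  (forall a : car A1 -> car A2, v1 (fun n => a (s1 n)) = v2 (fun n => a (s2 n))) ->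
  u1 s1 = u2 s2.
Proof.
  intros H1 H2 Hv.
  set (t := t_of s1 s2).
  set (r := fun i => epsilon (inhabits 0) (fun j => t j = t i)).
  assert (tr : forall i, t (r i) = t i).
  { intro i. apply (epsilon_spec (inhabits 0) (fun j => t j = t i)). now exists i. }
  assert (t0 : forall m, t (pr 0 m) = s1 m).
  { intro m. unfold t, t_of, pr. now rewrite cancel_of_to. }
  assert (t1 : forall m, t (pr 1 m) = s2 m).
  { intro m. unfold t, t_of, pr. now rewrite cancel_of_to. }
  assert (Rc1 : R (fun s => u1 (fun m => s (r (pr 0 m)))) (fun b => v1 (fun m => b (r (pr 0 m))))).
  { exact (Rq _ _ _ _ H1 (fun m => Re (r (pr 0 m)))). }
  assert (Rc2 : R (fun s => u2 (fun m => s (r (pr 1 m)))) (fun b => v2 (fun m => b (r (pr 1 m))))).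
  { exact (Rq _ _ _ _ H2 (fun m => Re (r (pr 1 m)))). }
  assert (Ek : (fun b => v1 (fun m => b (r (pr 0 m)))) = (fun b => v2 (fun m => b (r (pr 1 m))))).
  { apply functional_extensionality; intro b.
    set (a := fun x => b (epsilon (inhabits 0) (fun j => t j = x))).
    assert (Ea : forall i, a (t i) = b (r i)) by reflexivity.
    transitivity (v1 (fun m => a (s1 m))).
    { f_equal. apply functional_extensionality; intro m. now rewrite <- t0, Ea. }
    rewrite Hv. f_equal. apply functional_extensionality; intro m. now rewrite <- t1, Ea. }
  rewrite Ek in Rc1. pose proof (R_inj Rc1 Rc2) as Ec.
  apply (f_equal (fun c => c t)) in Ec. simpl in Ec.
  replace s1 with (fun m => t (r (pr 0 m))).
  2:{ apply functional_extensionality; intro m. now rewrite tr, t0. }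
  replace s2 with (fun m => t (r (pr 1 m))).
  2:{ apply functional_extensionality; intro m. now rewrite tr, t1. }
  exact Ec.
Qed.

Definition I := car A1 -> car A2.
Definition P := prod_alg (fun _ : I => A2).
Definition trip := (((nat -> car A1) -> car A1) * ((nat -> car A2) -> car A2) * (nat -> car A1))%type.
Definition good (x : car P) (w : trip) : Prop :=
  R (fst (fst w)) (snd (fst w)) /\ x = fun a => snd (fst w) (fun n => a (snd w n)).
Definition Pr (x : car P) : Prop := exists w, good x w.

Definition cs (ws : nat -> trip) (k : nat) : car A1 :=
  let (n, m) := of_nat k in snd (ws n) m.
Definition cu (f : tau) (ws : nat -> trip) : (nat -> car A1) -> car A1 :=
  fun s => @op tau A1 f (fun n => fst (fst (ws n)) (fun m => s (pr n m))).
Definition cv (f : tau) (ws : nat -> trip) : (nat -> car A2) -> car A2 :=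
  fun b => @op tau A2 f (fun n => snd (fst (ws n)) (fun m => b (pr n m))).

Lemma cR f ws : (forall n, R (fst (fst (ws n))) (snd (fst (ws n)))) -> R (cu f ws) (cv f ws).
Proof.
  intro H. exact (Rq _ _ _ _ (Rf f) (fun n => Rq _ _ _ _ (H n) (fun m => Re (pr n m)))).
Qed.

Lemma cs_pr ws n m : cs ws (pr n m) = snd (ws n) m.
Proof. unfold cs, pr. now rewrite cancel_of_to. Qed.

Lemma cv_eq f ws (a : car A1 -> car A2) :
  cv f ws (fun k => a (cs ws k)) = @op tau A2 f (fun n => snd (fst (ws n)) (fun m => a (snd (ws n) m))).
Proof.
  unfold cv. f_equal. apply functional_extensionality; intro n. f_equal.
  apply functional_extensionality; intro m. now rewrite cs_pr.
Qed.

Lemma cu_eq f ws :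
  cu f ws (cs ws) = @op tau A1 f (fun n => fst (fst (ws n)) (snd (ws n))).
Proof.
  unfold cu. f_equal. apply functional_extensionality; intro n. f_equal.
  apply functional_extensionality; intro m. now rewrite cs_pr.
Qed.

Lemma Pr_closed f (xs : nat -> car P) : (forall i, Pr (xs i)) -> Pr (@op tau P f xs).
Proof.
  intro H.
  set (ws := fun i => proj1_sig (constructive_indefinite_description _ (H i))).
  assert (Hw : forall i, good (xs i) (ws i)).
  { intro i. exact (proj2_sig (constructive_indefinite_description _ (H i))). }
  exists (cu f ws, cv f ws, cs ws). split; [apply cR; intro n; apply (Hw n)|].
  cbn [fst snd]. unfold P; cbn [op prod_alg car].
  apply functional_extensionality_dep; intro a. rewrite cv_eq.
  cbn. f_equal. apply functional_extensionality; intro n.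
  destruct (Hw n) as [_ E]. now rewrite E.
Qed.

Definition Sub : subuniverse P := @SubU tau P Pr Pr_closed.

Definition wit (x : car (sub_alg Sub)) : trip :=
  proj1_sig (constructive_indefinite_description _ (proj2_sig x)).
Lemma wit_good x : good (proj1_sig x) (wit x).
Proof. exact (proj2_sig (constructive_indefinite_description _ (proj2_sig x))). Qed.

Definition phi (x : car (sub_alg Sub)) : car A1 := fst (fst (wit x)) (snd (wit x)).

Lemma phi_hom : is_hom phi.
Proof.
  intros f xs. unfold phi at 1.
  destruct (wit_good (@op tau (sub_alg Sub) f xs)) as [R0 E0].
  set (ws := fun n => wit (xs n)).
  assert (Hw : forall n, good (proj1_sig (xs n)) (ws n)) by (intro n; apply wit_good).
  transitivity (cu f ws (cs ws)).
  - apply (WD _ _ _ _ _ _ R0 (cR f ws (fun n => proj1 (Hw n)))).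
    intro a. rewrite cv_eq.
    pose proof (f_equal (fun z => z a) E0) as E1. cbn beta in E1. rewrite <- E1.
    cbn. f_equal. apply functional_extensionality; intro n.
    destruct (Hw n) as [_ E]. exact (f_equal (fun z : car P => z a) E).
  - rewrite cu_eq. reflexivity.
Qed.

Lemma phi_surj : forall y, exists x, phi x = y.
Proof.
  intro y.
  assert (p : Pr (fun a => a y)).
  { exists ((fun s => s 0), (fun s => s 0), (fun _ => y)). split; [apply Re|reflexivity]. }
  exists (exist _ _ p). unfold phi.
  destruct (wit_good (exist Pr _ p)) as [R0 E0].
  refine (WD _ _ _ (fun s => s 0) (fun s => s 0) (fun _ => y) R0 (Re 0) _).
  intro a. pose proof (f_equal (fun z => z a) E0) as E1. cbn in E1. cbn. now rewrite <- E1.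
Qed.

Lemma key : variety (fun X => X = A2) A1.
Proof.
  intros C HI HH HS HP HB.
  assert (C2 : C A2) by (apply HB; reflexivity).
  assert (CP : C P) by (apply HP; intro; exact C2).
  assert (CS : C (sub_alg Sub)) by (apply HS; exact CP).
  exact (HH _ _ phi CS phi_hom phi_surj).
Qed.
End Key.

Lemma diamond_iter_eq (tau : Type) (K : class tau) (W : WellOrder) (x : W) (A : alg tau) :
  diamond_iter K x A <->
       ((forall y, ~ @wo_lt W y x) /\ K A) \/
       (exists y (h : @wo_lt W y x),
          (forall z, @wo_lt W z x -> z = y \/ @wo_lt W z y) /\
          diamond (fun B => diamond_iter K y B) A) \/
       ((exists y, @wo_lt W y x) /\
        (forall y, @wo_lt W y x -> exists z, @wo_lt W y z /\ @wo_lt W z x) /\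
        exists y (h : @wo_lt W y x), diamond_iter K y A).
Proof.
  unfold diamond_iter at 1. rewrite Fix_eq. { reflexivity. }
  intros x0 f1 f2 Hf.
  assert (E : f1 = f2).
  { apply functional_extensionality_dep; intro y.
    apply functional_extensionality_dep; intro p. apply Hf. }
  now rewrite E.
Qed.

Lemma var_refl (tau : Type) (A : alg tau) : variety (fun X => X = A) A.
Proof. intros C _ _ _ _ HB. now apply HB. Qed.

Lemma var_trans (tau : Type) (A B D : alg tau) :
  variety (fun X => X = B) A -> variety (fun X => X = D) B -> variety (fun X => X = D) A.
Proof.
  intros H1 H2 C HI HH HS HP HB. apply H1; auto.
  intros X ->. apply H2; auto.
Qed.

Lemma var_iso (tau : Type) (A B D : alg tau) :
  iso A B -> variety (fun X => X = D) B -> variety (fun X => X = D) A.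
Proof.
  intros Hi H C HI HH HS HP HB. apply (HI B); [apply H; auto|]. now apply iso_sym.
Qed.

Definition W1 : WellOrder.
Proof.
  refine (@Defs.WO unit (fun _ _ : unit => False) _ _ _).
  - intro x. constructor. intros y [].
  - intros _ _ _ [].
  - intros [] []. right; left; reflexivity.
Defined.

Theorem lemma6p10 (tau : Type) (K : class tau) :
  (forall A, K A -> diamond_union K A) /\
  (forall A, diamond_union K A ->
     exists B, K B /\ variety (fun X => X = B) A) /\
  (forall A, (exists B, K B /\ variety (fun X => X = B) A) -> variety K A).
Proof.
  split; [|split].
  - intros A HA. exists W1, tt. apply diamond_iter_eq. left. split; [intros y []|exact HA].
  - intros A [W [mu Hmu]]. revert A Hmu.
    pattern mu. apply (well_founded_ind (@wo_wf W)). clear mu.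
    intros x IH A Hx. apply diamond_iter_eq in Hx.
    destruct Hx as [[_ HK] | [[y [hy [_ Hd]]] | [_ [_ [y [hy Hy]]]]]].
    + exists A. split; [exact HK|apply var_refl].
    + destruct Hd as [A' [Hi [S [_ [A'' [HA'' [S'' [h [g [Hh [Hgh _]]]]]]]]]]].
      destruct (IH y hy A'' HA'') as [B [HB HV]].
      exists B. split; [exact HB|].
      apply (var_iso _ _ _ _ Hi). exact (var_trans _ _ _ _ (@key _ _ _ _ _ h g Hh Hgh) HV).
    + exact (IH y hy A Hy).
  - intros A [B [HB HV]] C HI HH HS HP HK. apply HV; auto.
    intros X ->. now apply HK.
Qed.
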